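(* Let $\Gamma$ be a temporal theory and $M$ a total THT model, and let $\mathrm{Th}(M):=\{\varphi\mid M,(0,0)\models\varphi\}$. The following are equivalent: (1) $M$ is a temporal equilibrium model of $\Gamma$; (2) for every temporal formula $\varphi$: $\Gamma\cup\{\neg\psi\mid\psi\notin\mathrm{Th}(M)\}\models_{\mathrm{THT}}\varphi$ iff $\varphi\in\mathrm{Th}(M)$.
   Context: Fix a countable set $\mathbb{P}$ of atoms. Temporal formulas: $\varphi ::= p\mid\bot\mid\varphi\wedge\varphi\mid\varphi\vee\varphi\mid\varphi\to\varphi\mid\circ\varphi\mid\varphi\,\mathsf{U}\,\varphi\mid\varphi\,\mathsf{R}\,\varphi$; $\neg\varphi:=\varphi\to\bot$. The THT frame is $W=\mathbb{N}\times\{0,1\}$, $(i,h)\preccurlyeq(j,t)$ iff $i=j$ and $h\le t$, $S((i,k))=(i+1,k)$. A THT model is $((W,\preccurlyeq,S),V)$ with $V:W\to2^{\mathbb{P}}$ and $V((i,0))\subseteq V((i,1))$. Satisfaction: $M,w\models p$ iff $p\in V(w)$; $\bot$ never; $\wedge,\vee$ pointwise; $M,w\models\varphi\to\psi$ iff for all $v\succcurlyeq w$, $M,v\models\varphi$ implies $M,v\models\psi$; $M,w\models\circ\varphi$ iff $M,S(w)\models\varphi$; $\varphi\,\mathsf{U}\,\psi$: some $k\ge0$ with $M,S^k(w)\models\psi$ and $M,S^i(w)\models\varphi$ for all $0\le i<k$; $\varphi\,\mathsf{R}\,\psi$: for all $k\ge0$, $M,S^k(w)\models\psi$ or $M,S^i(w)\models\varphi$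 for some $0\le i<k$. $M$ is total if $V((i,0))=V((i,1))$ for all $i$. $M'\le M$ iff $V'((i,1))=V((i,1))$ and $V'((i,0))\subseteq V((i,0))$ for all $i$; $M'<M$ iff $M'\le M$ and $V'\ne V$. A temporal equilibrium model of $\Gamma$ is a total THT model $M$ with $M,(0,0)\models\Gamma$ such that no THT model $M'<M$ has $M',(0,0)\models\Gamma$. $\Gamma\models_{\mathrm{THT}}\varphi$ means every THT model and world satisfying all formulas of $\Gamma$ satisfies $\varphi$. *)

(* Defs.v *)
From mathcomp Require Import ssreflect ssrfun ssrbool eqtype ssrnat choice.
Set Implicit Arguments.
Unset Strict Implicit.
Unset Printing Implicit Defensive.

Section THT.
Variable P : countType.

Inductive formula : Type :=
| Atom of P
| Bot
| And of formula & formula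
| Or of formula & formula
| Impl of formula & formula
| Next of formula
| Until of formula & formula
| Release of formula & formula.

Definition Neg (phi : formula) : formula := Impl phi Bot.

(* A valuation: V i h is the set of atoms true at world (i,h),
   with h = false standing for 0 ("here") and h = true for 1 ("there"). *)
Definition valuation := nat -> bool -> P -> Prop.

Definition is_THT (V : valuation) : Prop :=
  forall i p, V i false p -> V i true p.

Definition hle (h t : bool) : Prop := h = true -> t = true.

Fixpoint sat (V : valuation) (i : nat) (h : bool) (phi : formula) : Prop :=
  match phi with
  | Atom p => V i h p
  | Bot => False
  | And a b => sat V i h a /\ sat V i h b
  | Or a b => sat V i h a \/ sat V i h b
  | Impl a b => forall t, hle h t -> sat V i t a -> sat V i t b
  | Next a => sat V i.+1 h a
  | Until a b => exists k, sat V (i + k) h b /\ (forall j, j < k -> sat V (i + j) h a)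
  | Release a b => forall k, sat V (i + k) h b \/ (exists j, j < k /\ sat V (i + j) h a)
  end.

Definition theory := formula -> Prop.

Definition sat_theory (V : valuation) i h (G : theory) : Prop :=
  forall g, G g -> sat V i h g.

Definition total_model (V : valuation) : Prop :=
  forall i p, V i false p <-> V i true p.

Definition leM (V' V : valuation) : Prop :=
  (forall i p, V' i true p <-> V i true p) /\
  (forall i p, V' i false p -> V i false p).

Definition ltM (V' V : valuation) : Prop :=
  leM V' V /\ ~ (forall i h p, V' i h p <-> V i h p).

Definition temporal_equilibrium (G : theory) (V : valuation) : Prop :=
  is_THT V /\ total_model V /\ sat_theory V 0 false G /\
  ~ (exists V', is_THT V' /\ ltM V' V /\ sat_theory V' 0 false G).

Definition tht_entails (G : theory) (phi : formula) : Prop :=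
  forall V, is_THT V -> forall i h, sat_theory V i h G -> sat V i h phi.

Definition Th (V : valuation) : theory := fun phi => sat V 0 false phi.

Definition extend_neg (G : theory) (V : valuation) : theory :=
  fun chi => G chi \/ exists psi, ~ Th V psi /\ chi = Neg psi.

End THT.

(* Main.v *)
From Stdlib Require Import Classical.
Require Import Defs.
From mathcomp Require Import ssreflect ssrfun ssrbool eqtype ssrnat choice.

Set Implicit Arguments.
Section L.
Variable P : countType.

Definition shiftV (V : valuation P) i : valuation P := fun k => V (i + k).

Lemma sat_shift V i (phi : formula P) : forall j h,
  sat (shiftV V i) j h phi <-> sat V (i + j) h phi.
Proof.
induction phi as [p| |a IHa b IHb|a IHa b IHb|a IHa b IHb|a IHa|a IHa b IHb|a IHa b IHb];
 intros j h; simpl.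
- unfold shiftV; tauto.
- tauto.
- rewrite IHa IHb; tauto.
- rewrite IHa IHb; tauto.
- split; intros H t Ht; [rewrite -IHa -IHb|rewrite IHa IHb]; auto.
- rewrite IHa addnS; tauto.
- have e : forall m, i + (j + m) = i + j + m by intros; apply addnA.
  split; intros [k [H1 H2]]; exists k; split.
  + by rewrite -e -IHb.
  + intros m Hm; rewrite -e -IHa; auto.
  + by rewrite IHb e.
  + intros m Hm; rewrite IHa e; auto.
- have e : forall m, i + (j + m) = i + j + m by intros; apply addnA.
  split; intros H k; destruct (H k) as [H1|[m [H2 H3]]].
  + left; by rewrite -e -IHb.
  + right; exists m; split; auto; rewrite -e -IHa; auto.
  + left; by rewrite IHb e.
  + right; exists m; split; auto; rewrite IHa e; auto.
Qed.

Lemma persist V (phi : formula P) : is_THT V -> forall i,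
  sat V i false phi -> sat V i true phi.
Proof.
intros HV.
induction phi as [p| |a IHa b IHb|a IHa b IHb|a IHa b IHb|a IHa|a IHa b IHb|a IHa b IHb];
 intros i; simpl.
- apply HV.
- tauto.
- intros [H1 H2]; auto.
- intros [H1|H2]; auto.
- intros H t Ht; apply H; unfold hle; auto.
- auto.
- intros [k [H1 H2]]; exists k; split; auto.
- intros H k; destruct (H k) as [H1|[m [H2 H3]]]; [left|right]; eauto.
Qed.

Lemma total_sat V (phi : formula P) : total_model V -> forall i,
  sat V i false phi <-> sat V i true phi.
Proof.
intros HV.
induction phi as [p| |a IHa b IHb|a IHa b IHb|a IHa b IHb|a IHa|a IHa b IHb|a IHa b IHb];
 intros i; simpl.
- apply HV.
- tauto.
- rewrite IHa IHb; tauto.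
- rewrite IHa IHb; tauto.
- split; intros H t Ht.
  + apply H; unfold hle; auto.
  + destruct t; [apply H; unfold hle; auto|].
    intros Ha; apply IHb; apply H; [unfold hle; auto|]; by apply IHa.
- auto.
- split; intros [k [H1 H2]]; exists k; (split; [apply IHb; auto|]);
   intros m Hm; apply IHa; auto.
- split; intros H k; (destruct (H k) as [H1|[m [H2 H3]]];
   [left; apply IHb; auto | right; exists m; split; auto; apply IHa; auto]).
Qed.

Lemma there_sat V1 V2 (phi : formula P) :
  (forall i p, V1 i true p <-> V2 i true p) -> forall i,
  sat V1 i true phi <-> sat V2 i true phi.
Proof.
intros HV.
induction phi as [p| |a IHa b IHb|a IHa b IHb|a IHa b IHb|a IHa|a IHa b IHb|a IHa b IHb];
 intros i; simpl.
- apply HV.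
- tauto.
- rewrite IHa IHb; tauto.
- rewrite IHa IHb; tauto.
- split; intros H t Ht; (have E : t = true by apply Ht); subst t;
   [rewrite -IHa -IHb|rewrite IHa IHb]; auto.
- auto.
- split; intros [k [H1 H2]]; exists k; (split; [apply IHb; auto|]);
   intros m Hm; apply IHa; auto.
- split; intros H k; (destruct (H k) as [H1|[m [H2 H3]]];
   [left; apply IHb; auto | right; exists m; split; auto; apply IHa; auto]).
Qed.

Lemma ext_sat V1 V2 (phi : formula P) :
  (forall i h p, V1 i h p <-> V2 i h p) -> forall i h,
  sat V1 i h phi <-> sat V2 i h phi.
Proof.
intros HV.
induction phi as [p| |a IHa b IHb|a IHa b IHb|a IHa b IHb|a IHa|a IHa b IHb|a IHa b IHb];
 intros i h; simpl.
- apply HV.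
- tauto.
- rewrite IHa IHb; tauto.
- rewrite IHa IHb; tauto.
- split; intros H t Ht; [rewrite -IHa -IHb|rewrite IHa IHb]; auto.
- auto.
- split; intros [k [H1 H2]]; exists k; (split; [apply IHb; auto|]);
   intros m Hm; apply IHa; auto.
- split; intros H k; (destruct (H k) as [H1|[m [H2 H3]]];
   [left; apply IHb; auto | right; exists m; split; auto; apply IHa; auto]).
Qed.

Definition nxt n (p : P) : formula P := iter n (@Next P) (Atom p).

Lemma sat_nxt V n p : forall i h, sat V i h (nxt n p) <-> V (i + n) h p.
Proof.
induction n; intros i h; simpl.
- by rewrite addn0.
- rewrite IHn addSnnS; tauto.
Qed.

Lemma ext_neg_sat (G : theory P) (V : valuation P) : total_model V -> sat_theory V 0 false G ->
  sat_theory V 0 false (extend_neg G V).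
Proof.
intros Ht HG g [Hg|[psi [Hpsi ->]]]; [auto|].
simpl; intros t _ Hs; apply Hpsi; unfold Th.
destruct t; [by apply total_sat|done].
Qed.

End L.
Arguments nxt {P} n p.

Theorem lemma5p2 (P : countType) (G : theory P) (V : valuation P) :
  is_THT V -> total_model V ->
  (temporal_equilibrium G V <->
   (forall phi : formula P, tht_entails (extend_neg G V) phi <-> Th V phi)).
Proof.
intros HV Ht; split.
- intros [_ [_ [HG Hmin]]] phi; split.
  + intros He; apply He; auto; by apply ext_neg_sat.
  + intros Hphi V' HV' i h Hs.
    set W := shiftV V' i.
    have HW : is_THT W by intros n p; apply HV'.
    have HsW : sat_theory W 0 h (extend_neg G V).
    { intros g Hg; apply sat_shift; rewrite addn0; auto. }
    have Hth : forall n p, W n true p <-> V n true p.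
    { intros n p; split; intros Hp.
      - apply NNPP; intros Hn.
        have Hg : extend_neg G V (Neg (nxt n p)).
        { right; exists (nxt n p); split; auto.
          unfold Th; rewrite sat_nxt add0n; intros H; apply Hn; by apply HV. }
        apply (HsW _ Hg true); [by []|].
        by apply sat_nxt.
      - apply NNPP; intros Hn.
        have Hg : extend_neg G V (Neg (Neg (nxt n p))).
        { right; exists (Neg (nxt n p)); split; auto.
          unfold Th; simpl; intros H; apply (H true); [by []|].
          by apply sat_nxt. }
        apply (HsW _ Hg true); [by []|].
        intros t Htt Hs2; (have E : t = true by apply Htt); subst t.
        apply Hn; have := proj1 (sat_nxt W n p 0 true) Hs2; by rewrite add0n. }
    rewrite -(addn0 i) -sat_shift.
    destruct h.
    * apply (proj2 (@there_sat _ _ _ _ Hth _)). by apply total_sat.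
    * destruct (classic (forall n h p, W n h p <-> V n h p)) as [E|E].
      { by apply (proj2 (@ext_sat _ _ _ _ E _ _)). }
      exfalso; apply Hmin; exists W; split; auto; split.
      { split; [split; [exact Hth|]|exact E]. intros n p Hp; apply Ht, Hth, HW, Hp. }
      intros g Hg; apply HsW; by left.
- intros H; split; auto; split; auto.
  have HG : sat_theory V 0 false G.
  { intros g Hg; apply (proj1 (H g)); intros V' _ i h Hs; apply Hs; by left. }
  split; auto.
  intros [V' [HV' [[[Hth Hhere] Hneq] HG']]].
  apply Hneq; intros n h p; destruct h; [apply Hth|split; [apply Hhere|]].
  intros Hp.
  have Hs : sat_theory V' 0 false (extend_neg G V).
  { intros g [Hg|[psi [Hpsi ->]]]; [auto|].
    simpl; intros t _ Hs; apply Hpsi; unfold Th.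
    apply (proj2 (@total_sat _ V psi Ht 0)). apply (proj1 (@there_sat _ V' V psi Hth 0)).
    destruct t; [done|by apply persist]. }
  have Hn : Th V (nxt n p) by unfold Th; rewrite sat_nxt add0n.
  apply H in Hn. move: (Hn V' HV' 0 false Hs). by rewrite sat_nxt add0n.
Qed.
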